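(* Consider the multi-good panel bundle model described in the context, under the maintained restrictions there (at most two goods purchased per period; $\Gamma_{j_1j_2}\le 0$ for every bundle $j_1j_2\ne AB$) and the stationarity assumption. Then for any $(x_s,x_t)$ and any $s\ne t\le T$: (i) for each good $j\in\mathcal L$: if $P_s(\{j\}\mid x_s,x_t)>P_t(\{j\}\mid x_s,x_t)$, then $\Delta_{s,t}\delta_j>0$ or there is $k\in\mathcal L$, $k\ne j$, with $\Delta_{s,t}\delta_k<0$; (ii) for each bundle $j_1j_2$ with $j_1\ne j_2\in\mathcal L$: if $P_s(\{j_1j_2\}\mid x_s,x_t)>P_t(\{j_1j_2\}\mid x_s,x_t)$, then there is $j\in\{j_1,j_2\}$ with $\Delta_{s,t}\delta_j>0$, or there is $k\in\mathcal L\setminus\{j_1,j_2\}$ with $\Delta_{s,t}\delta_k<0$; (iii) for $\ell\in\{A,B\}$ with $\ell_{-1}$ the other of $A,B$: if $P_s(D_\ell\mid x_s,x_t)>P_t(D_\ell\mid x_s,x_t)$ where $D_\ell=\{\ell,AB\}$, then at least one of the following holds: $\Delta_{s,t}\delta_\ell>0$; $\Delta_{s,t}(\delta_\ell+\operatorname{sign}(\Gamma_{AB})\delta_{\ell_{-1}})>0$; there is $k\in\mathcal L\setminus\{A,B\}$ with $\Delta_{s,t}(\delta_{\ell_{-1}}-\delta_k)>0$; there is $k\in\mathcal L\setminus\{A,B\}$ with $\Delta_{s,t}\delta_k<0$.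
   Context: Multi-good panel bundle model: consumers $i$, periods $t=1,\dots,T$, $T\ge2$ fixed; a finite set of goods $\mathcal L=\{A,B,\dots,J\}$. Consumers purchase at most two goods per period, so the choice set is $\mathcal C=\{O\}\cup\{j:j\in\mathcal L\}\cup\{j_1j_2:j_1\ne j_2\in\mathcal L\}$ ($j$ = only good $j$, $j_1j_2$ = the bundle of $j_1,j_2$, $O$ = outside option). Utilities: $u_{ijt}=X_{ijt}'\beta_0+\alpha_{ij}+\epsilon_{ijt}$ for $j\in\mathcal L$, with $X_{ijt}$ observed, $\alpha_{ij}$ unobserved time-invariant fixed effects, $\epsilon_{ijt}$ unobserved shocks; $u_{ij_1j_2t}=u_{ij_1t}+u_{ij_2t}+\Gamma_{j_1j_2}$ where $\Gamma_{j_1j_2}=\Gamma_{j_1j_2}(Z_i)$ depends only on an observed time-invariant covariate $Z_i$ (suppressed, so $\Gamma_{j_1j_2}$ is treated as a constant); $u_{iOt}=0$. $\Gamma_{AB}$ may have any sign; $\Gamma_{j_1j_2}\le0$ for all $j_1j_2\ne AB$. $Y_{it}\in\mathcal C$ is the utility-maximizing choice; ties have probability zero. Stationarity: for all $s,t\le T$, the distribution of $\epsilon_{is}=(\epsilon_{ijs})_{j\in\mathcal L}$ conditional on $(X_{is},X_{it},Z_i,\alpha_i)$ equals that of $\epsilon_{it}$ conditional on the same. Also some component of $X_{it}$ not in $Z_i$ has a nonzero coefficient. Notation: $P_t(K\mid x_s,x_t)=\Pr(Y_{it}\in K\mid X_{is}=x_s,X_{it}=x_t)$ (with $Z_i$ suppressed);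 $\delta_{jt}=x_{jt}'\beta_0$ for $j\in\mathcal L$; $\Delta_{s,t}\delta_j=\delta_{js}-\delta_{jt}$; $\operatorname{sign}(x)=\mathbb 1\{x>0\}-\mathbb 1\{x<0\}$. *)

(* Defs.v *)
From HB Require Import structures.
From mathcomp Require Import all_boot all_order all_algebra.
From mathcomp Require Import all_classical all_reals all_analysis.
Set Implicit Arguments. Unset Strict Implicit. Unset Printing Implicit Defensive.
Import Order.TTheory GRing.Theory Num.Theory.
Local Open Scope ring_scope.
Local Open Scope classical_set_scope.

(* Choice set C: a choice is a set of goods S : {set L} with #|S| <= 2.
   set0 = outside option O, [set j] = only good j, [set j1; j2] = bundle j1j2. *)
Definition feasible (L : finType) (S : {set L}) : bool := (#|S| <= 2)%N.

Definition xdelta (R : realType) (L : finType) (p : nat)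
  (x : L -> 'I_p -> R) (beta : 'I_p -> R) (j : L) : R :=
  \sum_(k < p) x j k * beta k.

Definition choice_util (R : realType) (L : finType)
  (Gamma : {set L} -> R) (u : L -> R) (S : {set L}) : R :=
  \sum_(j in S) u j + (if #|S| == 2%N then Gamma S else 0).

Definition is_max (R : realType) (L : finType)
  (Gamma : {set L} -> R) (u : L -> R) (S : {set L}) : Prop :=
  feasible S /\ forall S' : {set L}, feasible S' ->
    choice_util Gamma u S' <= choice_util Gamma u S.

(* Main.v *)
Require Import Defs.
From HB Require Import structures.
From mathcomp Require Import all_boot all_order all_algebra.
From mathcomp Require Import all_classical all_reals all_analysis.
From mathcomp Require Import ring lra.
Import Order.TTheory GRing.Theory Num.Theory.
Local Open Scope ring_scope.
Local Open Scope classical_set_scope.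
Set Implicit Arguments. Unset Strict Implicit.

Definition VV (R : realType) (L : finType) := {ffun L -> R * R}.
HB.instance Definition _ (R : realType) (L : finType) := Choice.on (VV R L).
HB.instance Definition _ (R : realType) (L : finType) :=
  isPointed.Build (VV R L) [ffun=> (0,0)].

Definition rect (R : realType) (L : finType) (As Bs : L -> set R) : set (VV R L) :=
  [set v | forall j, As j (v j).1 /\ Bs j (v j).2].

Arguments rect {R L}.
Definition Grect (R : realType) (L : finType) : set (set (VV R L)) :=
  [set S | exists As Bs : L -> set R, (forall j, measurable (As j)) /\
     (forall j, measurable (Bs j)) /\ S = rect As Bs].

Lemma mconst d (T : measurableType d) (P : Prop) : measurable [set _ : T | P].
Proof.
case: (pselect P) => p.
  by have -> : [set _ : T | P] = setT by apply/seteqP; split.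
by have -> : [set _ : T | P] = set0 by apply/seteqP; split.
Qed.

Lemma mand d (T : measurableType d) (A B : T -> Prop) :
  measurable [set x | A x] -> measurable [set x | B x] ->
  measurable [set x | A x /\ B x].
Proof. exact: measurableI. Qed.

Lemma mimp d (T : measurableType d) (P : Prop) (B : T -> Prop) :
  measurable [set x | B x] -> measurable [set x | P -> B x].
Proof.
case: (pselect P) => p mB.
  by have -> : [set x | P -> B x] = [set x | B x] by apply/seteqP; split => x /=; auto.
by have -> : [set x : T | P -> B x] = setT by apply/seteqP; split => x /=.
Qed.

Lemma mall d (T : measurableType d) (I : finType) (Q : I -> T -> Prop) :
  (forall i, measurable [set x | Q i x]) -> measurable [set x | forall i, Q i x].
Proof.
move=> mQ.
have -> : [set x | forall i, Q i x] = \bigcap_(i in [set: I]) [set x | Q i x].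
  by apply/seteqP; split => [x H i _|x H i]; apply: H.
by apply: fin_bigcap_measurable; [exact: finite_finset | move=> i _; exact: mQ].
Qed.

Lemma mex d (T : measurableType d) (I : finType) (Q : I -> T -> Prop) :
  (forall i, measurable [set x | Q i x]) -> measurable [set x | exists i, Q i x].
Proof.
move=> mQ.
have -> : [set x | exists i, Q i x] = \bigcup_(i in [set: I]) [set x | Q i x].
  by apply/seteqP; split => x /= [i]; exists i.
by apply: fin_bigcup_measurable; [exact: finite_finset | move=> i _; exact: mQ].
Qed.

Lemma mle d (T : measurableType d) (R : realType) (f g : T -> R) :
  measurable_fun setT f -> measurable_fun setT g -> measurable [set x | f x <= g x].
Proof.
move=> mf mg; rewrite -[X in measurable X]setTI.
exact: measurable_fun_le.
Qed.

Notation VT R L := (g_sigma_algebraType (@Grect R L)).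

Lemma mcoord1 (R : realType) (L : finType) (j : L) :
  measurable_fun setT (fun v : VT R L => (v j).1).
Proof.
move=> _ B mB; rewrite setTI; apply: sub_sigma_algebra.
exists (fun i => if i == j then B else setT), (fun=> setT); split.
  by move=> i; case: ifP.
split => //; apply/seteqP; split => v /=.
  by move=> H i; case: eqP => [->|]//.
by move=> /(_ j) []; rewrite eqxx.
Qed.

Lemma mcoord2 (R : realType) (L : finType) (j : L) :
  measurable_fun setT (fun v : VT R L => (v j).2).
Proof.
move=> _ B mB; rewrite setTI; apply: sub_sigma_algebra.
exists (fun=> setT), (fun i => if i == j then B else setT); split => //.
split; first by move=> i; case: ifP.
apply/seteqP; split => v /=.
  by move=> H i; case: eqP => [->|]//.
by move=> /(_ j) []; rewrite eqxx.
Qed.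

Definition uv (R : realType) (L : finType) (c : L -> R) (v : VV R L) : L -> R :=
  fun j => c j + (v j).1 + (v j).2.

Arguments uv {R L}.
Lemma mutil (R : realType) (L : finType) (Gamma : {set L} -> R) (c : L -> R) (S : {set L}) :
  measurable_fun setT (fun v : VT R L => choice_util Gamma (uv c v) S).
Proof.
rewrite /choice_util.
apply: measurable_realfun.measurable_funD; last exact: measurable_cst.
under eq_fun do rewrite big_mkcond /=.
apply: measurable_sum => j.
case: (j \in S); last exact: measurable_cst.
rewrite /uv.
apply: measurable_realfun.measurable_funD; last exact: mcoord2.
apply: measurable_realfun.measurable_funD; first exact: measurable_cst.
exact: mcoord1.
Qed.

Lemma mmax (R : realType) (L : finType) (Gamma : {set L} -> R) (c : L -> R) (S : {set L}) :
  measurable [set v : VT R L | is_max Gamma (uv c v) S].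
Proof.
rewrite /is_max; apply: mand; first exact: mconst.
apply: mall => S'; apply: mimp; apply: mle; exact: mutil.
Qed.

Definition phi (R : realType) (L : finType) (T : Type) (alpha e : L -> T -> R) (w : T) : VT R L :=
  [ffun j => (alpha j w, e j w)].
Arguments phi {R L T}.

Lemma uv_phi (R : realType) (L : finType) (T : Type) (alpha e : L -> T -> R) (c : L -> R) w :
  uv c (phi alpha e w) = (fun j => c j + alpha j w + e j w).
Proof. by apply/funext => j; rewrite /uv /phi ffunE. Qed.

Lemma phi_rect (R : realType) (L : finType) (T : Type) (alpha e : L -> T -> R) As Bs :
  phi alpha e @^-1` rect As Bs = [set w | forall j, As j (alpha j w) /\ Bs j (e j w)].
Proof. by apply/seteqP; split => w /=; rewrite /rect /phi /=; move=> H j; move: (H j); rewrite ffunE. Qed.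

Lemma mphi (R : realType) (L : finType) d (T : measurableType d) (alpha e : L -> T -> R) :
  (forall j, measurable_fun setT (alpha j)) -> (forall j, measurable_fun setT (e j)) ->
  measurable_fun setT (phi alpha e).
Proof.
move=> ma me; apply: (@measurability _ _ T (VT R L) setT (phi alpha e) (@Grect R L)).
  by [].
move=> _ [_ [As [Bs [mAs [mBs ->]]]] <-]; rewrite setTI phi_rect.
apply: mall => j; apply: mand.
  by have := ma j measurableT (As j) (mAs j); rewrite setTI.
by have := me j measurableT (Bs j) (mBs j); rewrite setTI.
Qed.

Lemma stat_ext (R : realType) (L : finType) d (T : measurableType d) (P : probability T R)
  (alpha es et : L -> T -> R) :
  (forall j, measurable_fun setT (alpha j)) -> (forall j, measurable_fun setT (es j)) ->
  (forall j, measurable_fun setT (et j)) ->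
  (forall (As Bs : L -> set R),
     (forall j, measurable (As j)) -> (forall j, measurable (Bs j)) ->
     P [set w | forall j, As j (alpha j w) /\ Bs j (es j w)] =
     P [set w | forall j, As j (alpha j w) /\ Bs j (et j w)]) ->
  forall E : set (VT R L), measurable E ->
    P (phi alpha es @^-1` E) = P (phi alpha et @^-1` E).
Proof.
move=> ma mes met hstat E mE.
have ms := mphi ma mes; have mt := mphi ma met.
pose m1 := measure_function_pushforward__canonical__measure_function_Measure P ms.
pose m2 := measure_function_pushforward__canonical__measure_function_Measure P mt.
have := @g_sigma_algebra_measure_unique _ R (VT R L) (@Grect R L) _ (fun=> setT) _ _ m1 m2 _ _ _ E mE.
apply.
- by move=> A GA; apply: sub_sigma_algebra.
- move=> _; exists (fun=> setT), (fun=> setT); split => //; split => //.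
  by apply/seteqP; split.
- by apply/seteqP; split => // x _; exists 0%N.
- move=> _ _ [As [Bs [mAs [mBs ->]]]] [As' [Bs' [mAs' [mBs' ->]]]].
  exists (fun j => As j `&` As' j), (fun j => Bs j `&` Bs' j).
  split; first by move=> j; apply: measurableI.
  split; first by move=> j; apply: measurableI.
  apply/seteqP; split => v /=.
    by move=> [H1 H2] j; case: (H1 j) => ? ?; case: (H2 j) => ? ?.
  by move=> H; split => j; case: (H j) => [[? ?] [? ?]].
- move=> _ [As [Bs [mAs [mBs ->]]]].
  change (P (phi alpha es @^-1` rect As Bs) = P (phi alpha et @^-1` rect As Bs)).
  by rewrite !phi_rect; apply: hstat.
- by move=> _; change (P (phi alpha es @^-1` setT) < +oo)%E; rewrite preimage_setT probability_setT ltry.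
Qed.

Lemma lemu d (T : measurableType d) (R : realType) (mu : {measure set T -> \bar R}) (A B : set T) :
  measurable A -> measurable B -> A `<=` B -> (mu A <= mu B)%E.
Proof. by move=> mA mB sub; apply: le_measure => //; rewrite inE. Qed.

Lemma mYK d (T : measurableType d) (L : finType) (Y : T -> {set L}) (K : pred {set L}) :
  (forall S, measurable [set w | Y w = S]) -> measurable [set w | Y w \in K].
Proof.
move=> hY.
have -> : [set w | Y w \in K] = [set w | exists S, S \in K /\ Y w = S].
  apply/seteqP; split => w /=; first by move=> H; exists (Y w).
  by move=> [S [H ->]].
refine (@mex _ T _ (fun S w => S \in K /\ Y w = S) _) => S.
apply: mand; [exact: mconst | exact: hY].
Qed.

Lemma core (R : realType) d (T : measurableType d) (P : probability T R) (L : finType)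
  (Gamma : {set L} -> R) (alpha es et : L -> T -> R) (cs ct : L -> R)
  (Ys Yt : T -> {set L}) (K : pred {set L}) :
  (forall j, measurable_fun setT (alpha j)) -> (forall j, measurable_fun setT (es j)) ->
  (forall j, measurable_fun setT (et j)) ->
  (forall S, measurable [set w | Ys w = S]) -> (forall S, measurable [set w | Yt w = S]) ->
  (forall w, is_max Gamma (fun j => cs j + alpha j w + es j w) (Ys w)) ->
  (forall w, is_max Gamma (fun j => ct j + alpha j w + et j w) (Yt w)) ->
  P [set w | exists S1 S2 : {set L}, S1 != S2 /\
          is_max Gamma (fun j => ct j + alpha j w + et j w) S1 /\
          is_max Gamma (fun j => ct j + alpha j w + et j w) S2] = 0%E ->
  (forall (As Bs : L -> set R),
     (forall j, measurable (As j)) -> (forall j, measurable (Bs j)) ->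
     P [set w | forall j, As j (alpha j w) /\ Bs j (es j w)] =
     P [set w | forall j, As j (alpha j w) /\ Bs j (et j w)]) ->
  (forall (a e : L -> R) (S0 : {set L}), S0 \in K ->
     is_max Gamma (fun j => cs j + a j + e j) S0 ->
     exists S, S \in K /\ is_max Gamma (fun j => ct j + a j + e j) S) ->
  (P [set w | Ys w \in K] <= P [set w | Yt w \in K])%E.
Proof.
move=> ma mes met hYs hYt maxs maxt hties hstat hdet.
have ms := mphi ma mes; have mt := mphi ma met.
pose F := [set v : VT R L | exists S, S \in K /\ is_max Gamma (uv ct v) S].
have mF : measurable F.
  refine (@mex _ (VT R L) _ (fun S v => S \in K /\ is_max Gamma (uv ct v) S) _) => S.
  apply: mand; [exact: mconst | exact: mmax].
have msF : measurable (phi alpha es @^-1` F) by have := ms measurableT F mF; rewrite setTI.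
have mtF : measurable (phi alpha et @^-1` F) by have := mt measurableT F mF; rewrite setTI.
pose TS := [set v : VT R L | exists S1 S2 : {set L}, S1 != S2 /\
          is_max Gamma (uv ct v) S1 /\ is_max Gamma (uv ct v) S2].
have mTS : measurable TS.
  refine (@mex _ (VT R L) _ (fun S1 v => exists S2, S1 != S2 /\
          is_max Gamma (uv ct v) S1 /\ is_max Gamma (uv ct v) S2) _) => S1.
  refine (@mex _ (VT R L) _ (fun S2 v => S1 != S2 /\
          is_max Gamma (uv ct v) S1 /\ is_max Gamma (uv ct v) S2) _) => S2.
  apply: mand; first exact: mconst.
  by apply: mand; exact: mmax.
have eT : [set w | exists S1 S2 : {set L}, S1 != S2 /\
          is_max Gamma (fun j => ct j + alpha j w + et j w) S1 /\
          is_max Gamma (fun j => ct j + alpha j w + et j w) S2] = phi alpha et @^-1` TS.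
  by apply/seteqP; split => w; rewrite /preimage /TS /= uv_phi.
have mT : measurable (phi alpha et @^-1` TS) by have := mt measurableT TS mTS; rewrite setTI.
rewrite eT in hties.
apply: (@le_trans _ _ (P (phi alpha es @^-1` F))).
  apply: lemu => //; first exact: mYK.
  move=> w /= Hw; rewrite /preimage /F /= uv_phi.
  exact: (hdet (fun j => alpha j w) (fun j => es j w) (Ys w) Hw (maxs w)).
rewrite (stat_ext ma mes met hstat mF).
apply: (@le_trans _ _ (P ([set w | Yt w \in K] `|` phi alpha et @^-1` TS))).
  apply: lemu => //; first by apply: measurableU => //; exact: mYK.
  move=> w; rewrite /preimage /F /= uv_phi => -[S [SK HS]].
  case KY: (Yt w \in K); first by left.
  right; rewrite /preimage /TS /= uv_phi; exists S, (Yt w); split; last by split => //; exact: maxt.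
  by apply/eqP => E; rewrite -E SK in KY.
apply: (@le_trans _ _ (P [set w | Yt w \in K] + P (phi alpha et @^-1` TS))%E).
  by apply: measureU2 => //; exact: mYK.
by rewrite hties adde0.
Qed.


Lemma cu0 (R : realType) (L : finType) (G : {set L} -> R) (u : L -> R) :
  choice_util G u (@finset.set0 L) = 0.
Proof. by rewrite /choice_util big_set0 cards0 add0r. Qed.

Lemma cu1 (R : realType) (L : finType) (G : {set L} -> R) (u : L -> R) k :
  choice_util G u [set k]%SET = u k.
Proof. by rewrite /choice_util big_set1 cards1 addr0. Qed.

Lemma cu2 (R : realType) (L : finType) (G : {set L} -> R) (u : L -> R) k1 k2 :
  k1 != k2 -> choice_util G u [set k1; k2]%SET = u k1 + u k2 + G [set k1; k2]%SET.
Proof.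
move=> hk; rewrite /choice_util cards2 hk /= big_setU1 ?big_set1 ?addrA //.
by rewrite inE.
Qed.

Lemma cu_shift (R : realType) (L : finType) (G : {set L} -> R) (u D : L -> R) S :
  choice_util G (fun j => u j + D j) S = choice_util G u S + \sum_(j in S) D j.
Proof. by rewrite /choice_util big_split /= addrAC. Qed.

Lemma feas_form (L : finType) (S : {set L}) : feasible S ->
  S = finset.set0 \/ (exists k, S = [set k]%SET) \/ (exists k1 k2, k1 != k2 /\ S = [set k1; k2]%SET).
Proof.
rewrite /feasible leq_eqVlt ltnS leq_eqVlt ltnS leqn0 => /or3P [/cards2P|/cards1P|/eqP/cards0_eq].
- by move=> h; right; right.
- by move=> h; right; left.
- by left.
Qed.

Lemma det12 (R : realType) (L : finType) (Gamma : {set L} -> R) (ut Dd : L -> R) (S0 : {set L}) :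
  (forall j, j \in S0 -> Dd j <= 0) -> (forall k, k \notin S0 -> 0 <= Dd k) ->
  is_max Gamma (fun j => ut j + Dd j) S0 -> is_max Gamma ut S0.
Proof.
move=> hin hout [f0 hm]; split => // S' fS'.
have := hm S' fS'; rewrite !cu_shift.
have : \sum_(j in S0) Dd j <= \sum_(j in S') Dd j.
  rewrite (big_setID S') (big_setID S0 (A := S')) /= finset.setIC.
  have h1 : \sum_(i in S0 :\: S') Dd i <= 0.
    by apply: sumr_le0 => i; rewrite inE => /andP[_ /hin].
  have h2 : 0 <= \sum_(i in S' :\: S0) Dd i.
    by apply: sumr_ge0 => i; rewrite inE => /andP[/hout].
  lra.
lra.
Qed.

Lemma set2C (L : finType) (a b : L) : [set a; b]%SET = [set b; a]%SET.
Proof. by rewrite finset.setUC. Qed.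

Lemma neqAB (L : finType) (l lm k x : L) : k != l -> k != lm ->
  ([set k; x]%SET != [set l; lm]%SET) && ([set x; k]%SET != [set l; lm]%SET).
Proof.
move=> kl klm; apply/andP; split; apply/eqP => E.
  have : k \in [set l; lm]%SET by rewrite -E !inE eqxx.
  by rewrite !inE (negbTE kl) (negbTE klm).
have : k \in [set l; lm]%SET by rewrite -E !inE eqxx orbT.
by rewrite !inE (negbTE kl) (negbTE klm).
Qed.

Lemma or_le (R : realType) (x y z : R) :
  (y <= z -> x <= z) -> (z < y -> x <= y) -> x <= y \/ x <= z.
Proof. by case: (leP y z) => h H1 H2; [right; exact: H1 | left; exact: H2]. Qed.

Lemma det3 (R : realType) (L : finType) (Gamma : {set L} -> R) (l lm : L) (ut Dd : L -> R) :
  l != lm ->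
  (forall k1 k2 : L, k1 != k2 -> [set k1; k2]%SET != [set l; lm]%SET ->
     Gamma [set k1; k2]%SET <= 0) ->
  Dd l <= 0 -> Dd l + Num.sg (Gamma [set l; lm]%SET) * Dd lm <= 0 ->
  (forall k, k != l -> k != lm -> Dd lm - Dd k <= 0) ->
  (forall k, k != l -> k != lm -> 0 <= Dd k) ->
  forall S0, (S0 == [set l]%SET) || (S0 == [set l; lm]%SET) ->
  is_max Gamma (fun j => ut j + Dd j) S0 ->
  exists S, ((S == [set l]%SET) || (S == [set l; lm]%SET)) /\ is_max Gamma ut S.
Proof.
move=> hne hG c1 c2 c3 c4 S0 HS0 [fS0 maxS].
have fs0 : feasible (@finset.set0 L) by rewrite /feasible cards0.
have fs1 (k : L) : feasible [set k]%SET by rewrite /feasible cards1.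
have fs2 : feasible [set l; lm]%SET by rewrite /feasible cards2 hne.
have h0 := maxS _ fs0; have hl := maxS _ (fs1 l); have hlm := maxS _ (fs1 lm).
have hAB := maxS _ fs2.
rewrite cu0 in h0; rewrite !cu1 in hl hlm; rewrite cu2 // in hAB.
have key : forall S', feasible S' ->
    choice_util Gamma (fun j => ut j + Dd j) S' <= choice_util Gamma (fun j => ut j + Dd j) S0 ->
    choice_util Gamma ut S' <= choice_util Gamma ut [set l]%SET \/
    choice_util Gamma ut S' <= choice_util Gamma ut [set l; lm]%SET.
  { move=> S' fS' hS'.
  have hk1 : forall k, ut k + Dd k <= choice_util Gamma (fun j => ut j + Dd j) S0.
    by move=> k; have := maxS _ (fs1 k); rewrite cu1.
  rewrite cu1 (cu2 _ _ hne).
  case/orP: HS0 => /eqP E; rewrite E ?cu1 ?(cu2 _ _ hne) in h0 hl hlm hAB hS' hk1.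
  all: have [gn|gp|g0] := ltrgtP (Gamma [set l; lm]%SET) 0;
   [rewrite (ltr0_sg gn) in c2 | rewrite (gtr0_sg gp) in c2 | rewrite g0 sgr0 in c2].
  all: case: (feas_form fS') => [ES|[[k ES]|[k1 [k2 [hk ES]]]]]; subst S'.
  all: rewrite ?cu0 ?cu1 in hS'.
  all: rewrite ?cu0 ?cu1.
  all: try (have [E1|kl] := eqVneq k l; [subst k|]).
  all: try (have [E1|klm] := eqVneq k lm; [subst k|]).
  all: try (have ? := c3 k kl klm; have ? := c4 k kl klm; have ? := hk1 k).
  all: try (have [E1|k1l] := eqVneq k1 l; [subst k1|]).
  all: try (have [E2|k2l] := eqVneq k2 l; [subst k2|]).
  all: try (have [E1|k1lm] := eqVneq k1 lm; [subst k1|]).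
  all: try (have [E2|k2lm] := eqVneq k2 lm; [subst k2|]).
  all: try by rewrite eqxx in hk.
  all: rewrite ?(set2C lm l) in hS'.
  all: rewrite ?(set2C lm l).
  all: try (rewrite (cu2 _ _ hne) in hS'; rewrite (cu2 _ _ hne)).
  all: try (rewrite (cu2 _ _ hk) in hS'; rewrite (cu2 _ _ hk)).
  all: try (have ? := c3 k1 k1l k1lm; have ? := c4 k1 k1l k1lm; have ? := hk1 k1;
            have ? := hG _ _ hk (proj1 (andP (neqAB _ k1l k1lm)))).
  all: try (have ? := c3 k2 k2l k2lm; have ? := c4 k2 k2l k2lm; have ? := hk1 k2;
            have ? := hG _ _ hk (proj2 (andP (neqAB _ k2l k2lm)))).
  all: apply: or_le => hc; lra. }
have [hc|hc] := leP (choice_util Gamma ut [set l]%SET) (choice_util Gamma ut [set l; lm]%SET).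
  exists [set l; lm]%SET; split; first by rewrite eqxx orbT.
  split => // S' fS'; case: (key S' fS' (maxS S' fS')) => h; lra.
exists [set l]%SET; split; first by rewrite eqxx.
split; first exact: fs1.
move=> S' fS'; case: (key S' fS' (maxS S' fS')) => h; lra.
Qed.

Unset Implicit Arguments.

Theorem proposition5
  (R : realType) (d : measure_display) (Omega : measurableType d)
  (P : probability Omega R)
  (L : finType) (A B : L) (hAB : A != B)
  (Gamma : {set L} -> R)
  (hGamma : forall j1 j2 : L, j1 != j2 -> [set j1; j2]%SET != [set A; B]%SET ->
              Gamma [set j1; j2]%SET <= 0)
  (p : nat) (beta : 'I_p -> R) (hbeta : exists k : 'I_p, beta k != 0)
  (T s t : nat) (hT : (2 <= T)%N) (hs : (1 <= s <= T)%N) (ht : (1 <= t <= T)%N)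
  (hst : s != t)
  (X : nat -> L -> 'I_p -> R)          (* X s = x_s, X t = x_t (conditioned on) *)
  (alpha : L -> Omega -> R)            (* fixed effects alpha_ij *)
  (eps : nat -> L -> Omega -> R)       (* shocks eps_ijr *)
  (Y : nat -> Omega -> {set L})        (* choices Y_ir *)
  (halpha : forall j, measurable_fun setT (alpha j))
  (heps : forall r j, measurable_fun setT (eps r j))
  (hYmeas : forall r (S : {set L}), measurable [set w | Y r w = S])
  (hYmax : forall r w, r \in [:: s; t] ->
     is_max Gamma (fun j => xdelta (X r) beta j + alpha j w + eps r j w) (Y r w))
  (hties : forall r, r \in [:: s; t] ->
     P [set w | exists S1 S2 : {set L}, S1 != S2 /\
          is_max Gamma (fun j => xdelta (X r) beta j + alpha j w + eps r j w) S1 /\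
          is_max Gamma (fun j => xdelta (X r) beta j + alpha j w + eps r j w) S2]
       = 0%E)
  (hstat : forall (As Bs : L -> set R),
     (forall j, measurable (As j)) -> (forall j, measurable (Bs j)) ->
     P [set w | forall j, As j (alpha j w) /\ Bs j (eps s j w)] =
     P [set w | forall j, As j (alpha j w) /\ Bs j (eps t j w)]) :
  let Pr r (K : pred {set L}) := P [set w | Y r w \in K] in
  let Dd j := xdelta (X s) beta j - xdelta (X t) beta j in
  (* (i) *)
  (forall j : L, (Pr t (pred1 [set j]%SET) < Pr s (pred1 [set j]%SET))%E ->
     0 < Dd j \/ exists k : L, k != j /\ Dd k < 0) /\
  (* (ii) *)
  (forall j1 j2 : L, j1 != j2 ->
     (Pr t (pred1 [set j1; j2]%SET) < Pr s (pred1 [set j1; j2]%SET))%E ->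
     (exists j, j \in [:: j1; j2] /\ 0 < Dd j) \/
     exists k : L, k \notin [:: j1; j2] /\ Dd k < 0) /\
  (* (iii) *)
  (forall l lm : L, (l, lm) \in [:: (A, B); (B, A)] ->
     let D := [pred S : {set L} | (S == [set l]%SET) || (S == [set A; B]%SET)] in
     (Pr t D < Pr s D)%E ->
     [\/ 0 < Dd l,
         0 < Dd l + (Num.sg (Gamma [set A; B]%SET)) * Dd lm,
         exists k : L, k \notin [:: A; B] /\ 0 < Dd lm - Dd k
       | exists k : L, k \notin [:: A; B] /\ Dd k < 0]).
Proof.
move=> Pr Dd.
have sin : s \in [:: s; t] by rewrite inE eqxx.
have tin : t \in [:: s; t] by rewrite !inE eqxx orbT.
have CORE : forall K : pred {set L},
  (forall (a e : L -> R) (S0 : {set L}), S0 \in K ->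
     is_max Gamma (fun j => xdelta (X s) beta j + a j + e j) S0 ->
     exists S, S \in K /\ is_max Gamma (fun j => xdelta (X t) beta j + a j + e j) S) ->
  (Pr s K <= Pr t K)%E.
  move=> K hdet.
  exact: (@core R d Omega P L Gamma alpha (eps s) (eps t) (xdelta (X s) beta)
    (xdelta (X t) beta) (Y s) (Y t) K halpha (heps s) (heps t) (hYmeas s) (hYmeas t)
    (fun w => hYmax s w sin) (fun w => hYmax t w tin) (hties t tin) hstat hdet).
have SH : forall a e : L -> R,
  (fun j => xdelta (X s) beta j + a j + e j) =
  (fun j => (xdelta (X t) beta j + a j + e j) + Dd j).
  by move=> a e; apply/funext => j; rewrite /Dd; ring.
have NLT : forall K : pred {set L}, (Pr t K < Pr s K)%E -> (Pr s K <= Pr t K)%E -> False.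
  by move=> K h1 h2; move: (lt_le_trans h1 h2); rewrite ltxx.
split; [|split].
- move=> j Hlt.
  case: (pselect (0 < Dd j)) => [h|h]; first by left.
  case: (pselect (exists k, k != j /\ Dd k < 0)) => [h'|h']; first by right.
  exfalso; apply: (NLT _ Hlt); apply: CORE => a e S0; rewrite inE => /eqP -> hm.
  exists [set j]%SET; split; first by rewrite inE.
  rewrite SH in hm; apply: (det12 _ _ hm).
  + by move=> i; rewrite inE => /eqP ->; rewrite leNgt; apply/negP.
  + move=> k; rewrite inE => kj; rewrite leNgt; apply/negP => hk; apply: h'.
    by exists k.
- move=> j1 j2 hj Hlt.
  case: (pselect (exists j, j \in [:: j1; j2] /\ 0 < Dd j)) => [h|h]; first by left.
  case: (pselect (exists k, k \notin [:: j1; j2] /\ Dd k < 0)) => [h'|h']; first by right.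
  exfalso; apply: (NLT _ Hlt); apply: CORE => a e S0; rewrite inE => /eqP -> hm.
  exists [set j1; j2]%SET; split; first by rewrite inE.
  rewrite SH in hm; apply: (det12 _ _ hm).
  + move=> i hi; rewrite leNgt; apply/negP => hp; apply: h; exists i; split => //.
    by move: hi; rewrite !inE.
  + move=> k hk; rewrite leNgt; apply/negP => hn; apply: h'; exists k; split => //.
    by move: hk; rewrite !inE.
- move=> l lm Hin D Hlt.
  have [hne eAB nin] : [/\ l != lm, [set A; B]%SET = [set l; lm]%SET &
      forall k, (k \notin [:: A; B]) = (k != l) && (k != lm)].
    move: Hin; rewrite !inE => /orP[] /eqP [-> ->].
      by split => // k; rewrite !inE negb_or.
    by split; [rewrite eq_sym | exact: set2C | move=> k; rewrite !inE negb_or andbC].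
  case: (pselect (0 < Dd l)) => [h|h1]; first exact: Or41.
  case: (pselect (0 < Dd l + Num.sg (Gamma [set A; B]%SET) * Dd lm)) => [h|h2];
    first exact: Or42.
  case: (pselect (exists k, k \notin [:: A; B] /\ 0 < Dd lm - Dd k)) => [h|h3];
    first exact: Or43.
  case: (pselect (exists k, k \notin [:: A; B] /\ Dd k < 0)) => [h|h4];
    first exact: Or44.
  exfalso; apply: (NLT _ Hlt); apply: CORE => a e S0 HS0 hm.
  have HS0' : (S0 == [set l]%SET) || (S0 == [set l; lm]%SET).
    by move: HS0; rewrite /D inE -eAB.
  have hG' : forall k1 k2 : L, k1 != k2 -> [set k1; k2]%SET != [set l; lm]%SET ->
     Gamma [set k1; k2]%SET <= 0.
    by move=> k1 k2; rewrite -eAB; exact: hGamma.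
  have c1 : Dd l <= 0 by rewrite leNgt; apply/negP.
  have c2 : Dd l + Num.sg (Gamma [set l; lm]%SET) * Dd lm <= 0.
    by rewrite -eAB leNgt; apply/negP.
  have c3 : forall k, k != l -> k != lm -> Dd lm - Dd k <= 0.
    move=> k kl klm; rewrite leNgt; apply/negP => hp; apply: h3; exists k.
    by rewrite nin kl klm.
  have c4 : forall k, k != l -> k != lm -> 0 <= Dd k.
    move=> k kl klm; rewrite leNgt; apply/negP => hp; apply: h4; exists k.
    by rewrite nin kl klm.
  rewrite SH in hm.
  have [S [HS mS]] := det3 hne hG' c1 c2 c3 c4 HS0' hm.
  by exists S; split => //; rewrite /D inE eAB.
Qed.
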